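(* Let $\alpha>1$, $\beta\ge0$, and suppose the Fourier coefficients of $V$ satisfy $|v_k(0)|\le c_v e^{-\beta|k|}\langle k\rangle^{-\alpha}$ for all $k\in\mathbb{Z}$ (e.g. $V\in C^{\alpha,\beta,1}$). Then for all $j,k\in\mathbb{Z}$ $$|G_{jk}|\le \frac{3c_v e^{-\beta|j-k|}}{(\langle j\rangle+\langle k\rangle)\langle j-k\rangle^{\alpha}},$$ and for every $n\ge2$ $$|(G^n)_{jk}|\le \frac{(3c_v)^n c_\alpha^{\,n-1}e^{-\beta|j-k|}}{\langle j\rangle\langle k\rangle\langle j-k\rangle^{\alpha}}.$$
   Context: $V(x,t)=\sum_{k\in\mathbb{Z}}v_k(t)e^{ikx}$ is real-valued with $v_0\equiv0$; $\langle k\rangle=|k|+1$. $G$ is the infinite matrix (operator on $l^2(\mathbb{Z})$) with $G_{jk}=0$ if $j^2=k^2$ and $G_{jk}=\frac{v_{j-k}(0)}{j^2-k^2}$ if $j^2\ne k^2$. For $\nu>1$, $c_\nu$ denotes a constant depending only on $\nu$ such that for all $\beta\ge0$ and $s,m\in\mathbb{Z}$: $\sum_{k\in\mathbb{Z}}\frac{e^{-\beta|s-k|-\beta|k-m|}}{\langle s-k\rangle^\nu\langle k-m\rangle^\nu}\le\frac{c_\nu e^{-\beta|s-m|}}{\langle s-m\rangle^\nu}$. *)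

(* Defs.v *)
From Stdlib Require Import Reals ZArith.
From Coquelicot Require Import Coquelicot.
Open Scope R_scope.

Definition br (k : Z) : R := IZR (Z.abs k) + 1.

Definition zpsum (f : Z -> C) (N : nat) : C :=
  sum_n (fun i => f (Z.of_nat i - Z.of_nat N)%Z) (2 * N).

Definition rzpsum (f : Z -> R) (N : nat) : R :=
  sum_n (fun i => f (Z.of_nat i - Z.of_nat N)%Z) (2 * N).

(* sum over Z, as the limit of the symmetric partial sums (real and imaginary
   parts); it coincides with the sum over Z for absolutely summable families *)
Definition zsum (f : Z -> C) : C :=
  (real (Lim_seq (fun N => Re (zpsum f N))),
   real (Lim_seq (fun N => Im (zpsum f N)))).

(* the matrix G built from the Fourier coefficients v k = v_k(0) *)
Definition Gmat (v : Z -> C) (j k : Z) : C :=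
  if Z.eqb (j * j) (k * k) then 0%C
  else (v (j - k)%Z / RtoC (IZR (j * j - k * k)))%C.

Fixpoint Gpow (v : Z -> C) (n : nat) (j k : Z) : C :=
  match n with
  | O => if Z.eqb j k then 1%C else 0%C
  | S n' => zsum (fun m => (Gpow v n' j m * Gmat v m k)%C)
  end.

Definition conv_const (nu c : R) : Prop :=
  forall (beta : R), 0 <= beta -> forall (s m : Z),
    ex_finite_lim_seq (rzpsum (fun k =>
       exp (- beta * IZR (Z.abs (s - k)) - beta * IZR (Z.abs (k - m)))
       / (Rpower (br (s - k)) nu * Rpower (br (k - m)) nu))) /\
    real (Lim_seq (rzpsum (fun k =>
       exp (- beta * IZR (Z.abs (s - k)) - beta * IZR (Z.abs (k - m)))
       / (Rpower (br (s - k)) nu * Rpower (br (k - m)) nu))))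
    <= c * exp (- beta * IZR (Z.abs (s - m))) / Rpower (br (s - m)) nu.

(* Main.v *)
Require Import Defs.
From Stdlib Require Import Reals ZArith Lra Lia Psatz.
From Coquelicot Require Import Coquelicot.
Open Scope R_scope.

Lemma sym_rec {G : AbelianMonoid} (f : Z -> G) (N : nat) :
  sum_n (fun i => f (Z.of_nat i - Z.of_nat (S N))%Z) (2 * S N) =
  plus (plus (sum_n (fun i => f (Z.of_nat i - Z.of_nat N)%Z) (2 * N))
     (f (Z.of_nat (S N)))) (f (- Z.of_nat (S N))%Z).
Proof.
  replace (2 * S N)%nat with (S (S (2 * N))) by lia.
  rewrite sum_Sn. unfold sum_n.
  rewrite (sum_n_m_Chasles _ 0 0 (S (2*N))) by lia.
  rewrite sum_n_n. rewrite <- sum_n_m_S.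
  replace (Z.of_nat (S (S (2 * N))) - Z.of_nat (S N))%Z with (Z.of_nat (S N)) by lia.
  replace (Z.of_nat 0 - Z.of_nat (S N))%Z with (- Z.of_nat (S N))%Z by lia.
  rewrite (sum_n_m_ext _ (fun i => f (Z.of_nat i - Z.of_nat N)%Z)).
  2:{ intros k. f_equal. lia. }
  rewrite <- !plus_assoc. rewrite (plus_comm (f _)). rewrite <- plus_assoc. reflexivity.
Qed.

Lemma zp_rec (f : Z -> C) N :
  zpsum f (S N) = (zpsum f N + f (Z.of_nat (S N)) + f (- Z.of_nat (S N))%Z)%C.
Proof. unfold zpsum. rewrite sym_rec. reflexivity. Qed.

Lemma rzp_rec (f : Z -> R) N :
  rzpsum f (S N) = rzpsum f N + f (Z.of_nat (S N)) + f (- Z.of_nat (S N))%Z.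
Proof. unfold rzpsum. rewrite sym_rec. reflexivity. Qed.

Lemma zp0 (f : Z -> C) : zpsum f 0 = f 0%Z.
Proof. unfold zpsum. simpl. rewrite sum_O. reflexivity. Qed.
Lemma rzp0 (f : Z -> R) : rzpsum f 0 = f 0%Z.
Proof. unfold rzpsum. simpl. rewrite sum_O. reflexivity. Qed.


Lemma g_nonneg (f : Z -> C) (g : Z -> R) (Hfg : forall m, Cmod (f m) <= g m) m : 0 <= g m.
Proof. eapply Rle_trans; [apply Cmod_ge_0 | apply Hfg]. Qed.

Lemma T_incr (f : Z -> C) (g : Z -> R) (Hfg : forall m, Cmod (f m) <= g m) N : rzpsum g N <= rzpsum g (S N).
Proof. rewrite rzp_rec. pose proof (g_nonneg f g Hfg (Z.of_nat (S N))).
  pose proof (g_nonneg f g Hfg (- Z.of_nat (S N))%Z). lra. Qed.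

Lemma T_le (f : Z -> C) (g : Z -> R) (l : R) (Hfg : forall m, Cmod (f m) <= g m) (Hl : is_lim_seq (rzpsum g) l) N : rzpsum g N <= l.
Proof. apply (is_lim_seq_incr_compare _ l Hl (T_incr f g Hfg)). Qed.

Lemma S_mod (f : Z -> C) (g : Z -> R) (Hfg : forall m, Cmod (f m) <= g m) N : Cmod (zpsum f N) <= rzpsum g N.
Proof.
  induction N. rewrite zp0, rzp0. apply Hfg.
  rewrite zp_rec, rzp_rec.
  eapply Rle_trans. apply Cmod_triangle.
  eapply Rle_trans. apply Rplus_le_compat_r. apply Cmod_triangle.
  pose proof (Hfg (Z.of_nat (S N))). pose proof (Hfg (- Z.of_nat (S N))%Z). lra.
Qed.

Lemma comp_lim (f : Z -> C) (g : Z -> R) (l : R) (Hfg : forall m, Cmod (f m) <= g m) (Hl : is_lim_seq (rzpsum g) l) (p : C -> R) (Hadd : forall x y, p (x + y)%C = p x + p y)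
  (Hb : forall z, Rabs (p z) <= Cmod z) :
  exists a : R, is_lim_seq (fun N => p (zpsum f N)) a.
Proof.
  assert (Hrec : forall N, p (zpsum f (S N)) = p (zpsum f N) + p (f (Z.of_nat (S N))) + p (f (- Z.of_nat (S N))%Z)).
  { intros N. rewrite zp_rec, !Hadd. reflexivity. }
  assert (Ha : forall N, Rabs (p (zpsum f N)) <= rzpsum g N).
  { intros N. eapply Rle_trans. apply Hb. apply (S_mod f g Hfg). }
  assert (E1 : ex_finite_lim_seq (fun N => p (zpsum f N) + rzpsum g N)).
  { apply (ex_finite_lim_seq_incr _ (2 * l)).
    - intros N. rewrite Hrec, rzp_rec.
      pose proof (Hb (f (Z.of_nat (S N)))). pose proof (Hb (f (- Z.of_nat (S N))%Z)).
      pose proof (Hfg (Z.of_nat (S N))). pose proof (Hfg (- Z.of_nat (S N))%Z).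
      revert H H0. unfold Rabs. repeat destruct Rcase_abs; lra.
    - intros N. pose proof (Ha N). pose proof (T_le f g l Hfg Hl N). revert H. unfold Rabs. destruct Rcase_abs; lra. }
  destruct E1 as [b Hb1].
  exists (b - l).
  eapply is_lim_seq_ext. 2: apply (is_lim_seq_minus' _ _ _ _ Hb1 Hl).
  intros N. simpl. ring.
Qed.

Lemma dom (f : Z -> C) (g : Z -> R) (l : R) (Hfg : forall m, Cmod (f m) <= g m) (Hl : is_lim_seq (rzpsum g) l) : Cmod (zsum f) <= l.
Proof.
  destruct (comp_lim f g l Hfg Hl Re) as [a Ha].
  { intros x y. reflexivity. } { apply re_le_Cmod. }
  destruct (comp_lim f g l Hfg Hl Im) as [b Hb].
  { intros x y. reflexivity. }
  { intros z. pose proof (Cmod2_alt z). pose proof (Cmod_ge_0 z).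
    unfold Rabs; destruct Rcase_abs; nra. }
  unfold zsum. rewrite (is_lim_seq_unique _ _ Ha), (is_lim_seq_unique _ _ Hb). simpl real.
  assert (H0 : 0 <= l). { eapply Rle_trans. 2: apply (T_le f g l Hfg Hl 0). rewrite rzp0. apply (g_nonneg f g Hfg). }
  assert (Hle : Rbar_le (a * a + b * b) (l * l)).
  { eapply is_lim_seq_le.
    2: apply (is_lim_seq_plus' _ _ _ _ (is_lim_seq_mult' _ _ _ _ Ha Ha) (is_lim_seq_mult' _ _ _ _ Hb Hb)).
    2: apply (is_lim_seq_mult' _ _ _ _ Hl Hl).
    intros N. simpl.
    pose proof (Cmod2_alt (zpsum f N)). pose proof (S_mod f g Hfg N). pose proof (Cmod_ge_0 (zpsum f N)).
    simpl in H. unfold Re, Im in H. nra. }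
  simpl in Hle. unfold Cmod. simpl.
  rewrite <- (sqrt_Rsqr l H0). apply sqrt_le_1_alt. unfold Rsqr. nra.
Qed.

Lemma zp_delta (f : Z -> C) j (Hf : forall m, m <> j -> f m = 0%C) N :
  zpsum f N = if (Z.abs j <=? Z.of_nat N)%Z then f j else 0%C.
Proof.
  induction N.
  - rewrite zp0. destruct (Z.leb_spec (Z.abs j) (Z.of_nat 0)).
    + replace j with 0%Z by lia. reflexivity.
    + apply Hf. lia.
  - rewrite zp_rec, IHN.
    destruct (Z.leb_spec (Z.abs j) (Z.of_nat N)); destruct (Z.leb_spec (Z.abs j) (Z.of_nat (S N))); try lia.
    + rewrite (Hf (Z.of_nat (S N))) by lia. rewrite (Hf (- Z.of_nat (S N))%Z) by lia.
      rewrite !Cplus_0_r. reflexivity.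
    + destruct (Z.eq_dec j (Z.of_nat (S N))).
      * subst. rewrite (Hf (- Z.of_nat (S N))%Z) by lia. rewrite Cplus_0_r, Cplus_0_l. reflexivity.
      * assert (j = - Z.of_nat (S N))%Z by lia. subst.
        rewrite (Hf (Z.of_nat (S N))) by lia. rewrite !Cplus_0_l. reflexivity.
    + rewrite (Hf (Z.of_nat (S N))) by lia. rewrite (Hf (- Z.of_nat (S N))%Z) by lia.
      rewrite !Cplus_0_r. reflexivity.
Qed.

Lemma zsum_delta (f : Z -> C) j (Hf : forall m, m <> j -> f m = 0%C) : zsum f = f j.
Proof.
  assert (E : forall (p : C -> R), Lim_seq (fun N => p (zpsum f N)) = p (f j)).
  { intros p. apply is_lim_seq_unique.
    eapply is_lim_seq_ext_loc. 2: apply is_lim_seq_const.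
    exists (Z.abs_nat j). intros n Hn. rewrite (zp_delta f j Hf).
    destruct (Z.leb_spec (Z.abs j) (Z.of_nat n)); [reflexivity | lia]. }
  unfold zsum. rewrite (E Re), (E Im). simpl. destruct (f j); reflexivity.
Qed.

Lemma zl (j k : Z) : (j*j <> k*k -> Z.abs j + Z.abs k + 2 <= 3 * Z.abs (j*j - k*k))%Z.
Proof. intros H.
  replace (j*j-k*k)%Z with ((j-k)*(j+k))%Z by ring. rewrite Z.abs_mul.
  assert (j - k <> 0 /\ j + k <> 0)%Z as [H1 H2] by (split; intro; apply H; nia).
  destruct (Z.abs_spec j) as [[? ->]|[? ->]]; destruct (Z.abs_spec k) as [[? ->]|[? ->]];
  destruct (Z.abs_spec (j-k)) as [[? ->]|[? ->]]; destruct (Z.abs_spec (j+k)) as [[? ->]|[? ->]]; nia.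
Qed.

Lemma br_ge1 x : 1 <= br x.
Proof. unfold br. pose proof (IZR_le 0 _ (Z.abs_nonneg x)). lra. Qed.

Lemma Rp_pos x a : 0 < Rpower (br x) a.
Proof. unfold Rpower. apply exp_pos. Qed.

Lemma G_bound (v : Z -> C) (alpha beta cv : R) (Hcv : 0 <= cv)
  (Hdecay : forall k : Z,
     Cmod (v k) <= cv * exp (- beta * IZR (Z.abs k)) / Rpower (br k) alpha) j k :
  Cmod (Gmat v j k) <=
       3 * cv * exp (- beta * IZR (Z.abs (j - k)))
       / ((br j + br k) * Rpower (br (j - k)) alpha).
Proof.
  pose proof (br_ge1 j). pose proof (br_ge1 k). pose proof (Rp_pos (j - k) alpha).
  pose proof (exp_pos (- beta * IZR (Z.abs (j - k)))).
  set (P := Rpower (br (j - k)) alpha) in *. set (E := exp (- beta * IZR (Z.abs (j - k)))) in *.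
  replace (3 * cv * E / ((br j + br k) * P)) with (3 * (cv * E / P) / (br j + br k)) by (field; lra).
  assert (HX : 0 <= cv * E / P).
  { unfold Rdiv. apply Rmult_le_pos. nra. left. apply Rinv_0_lt_compat. lra. }
  unfold Gmat. destruct (Z.eqb_spec (j * j) (k * k)).
  - rewrite Cmod_0. unfold Rdiv. apply Rmult_le_pos. lra. left. apply Rinv_0_lt_compat. lra.
  - pose proof (zl j k n) as Hz.
    assert (HD : IZR (Z.abs j) + IZR (Z.abs k) + 2 <= 3 * IZR (Z.abs (j*j-k*k))).
    { apply IZR_le in Hz. rewrite plus_IZR, plus_IZR, mult_IZR in Hz. exact Hz. }
    assert (HD0 : (0 < Z.abs (j * j - k * k))%Z) by lia.
    apply IZR_lt in HD0.
    rewrite Cmod_div.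
    2:{ intro Hc. apply (f_equal fst) in Hc. simpl in Hc. apply eq_IZR in Hc. lia. }
    rewrite Cmod_R. rewrite <- abs_IZR. 
    pose proof (Hdecay (j - k)%Z) as Hd. fold P E in Hd.
    apply Rle_trans with (cv * E / P / IZR (Z.abs (j * j - k * k))).
    { unfold Rdiv at 1 3. apply Rmult_le_compat_r. left. apply Rinv_0_lt_compat. lra. exact Hd. }
    unfold br in *.
    unfold Rdiv. set (X := cv * E * / P) in *.
    replace (3 * X * / (IZR (Z.abs j) + 1 + (IZR (Z.abs k) + 1))) with (X * (3 * / (IZR (Z.abs j) + 1 + (IZR (Z.abs k) + 1)))) by ring.
    apply Rmult_le_compat_l. exact HX.
    replace (3 * / (IZR (Z.abs j) + 1 + (IZR (Z.abs k) + 1))) with (/ ((IZR (Z.abs j) + 1 + (IZR (Z.abs k) + 1)) / 3)) by (field; lra).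
    apply Rinv_le_contravar. lra. lra.
Qed.

Lemma step (v : Z -> C) (alpha beta cv calpha : R) (Hbeta : 0 <= beta) (Hcv : 0 <= cv)
  (Hcalpha : conv_const alpha calpha)
  (Hdecay : forall k : Z,
     Cmod (v k) <= cv * exp (- beta * IZR (Z.abs k)) / Rpower (br k) alpha)
  (P : Z -> C) (K : R) (Dm : Z -> R) (j k : Z) (HK : 0 <= K) (HD : forall m, 0 < Dm m)
  (HDk : forall m, br j * br k <= Dm m * (br m + br k))
  (HP : forall m, Cmod (P m) <= K * exp (- beta * IZR (Z.abs (j - m))) / (Dm m * Rpower (br (j - m)) alpha)) :
  Cmod (zsum (fun m => (P m * Gmat v m k)%C)) <=
    K * (3 * cv) * calpha * exp (- beta * IZR (Z.abs (j - k))) / (br j * br k * Rpower (br (j - k)) alpha).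
Proof.
  set (h := fun m => exp (- beta * IZR (Z.abs (j - m)) - beta * IZR (Z.abs (m - k)))
       / (Rpower (br (j - m)) alpha * Rpower (br (m - k)) alpha)).
  destruct (Hcalpha beta Hbeta j k) as [[l Hl] Hle]. fold h in Hl, Hle.
  rewrite (is_lim_seq_unique _ _ Hl) in Hle. simpl in Hle.
  pose proof (br_ge1 j) as Bj. pose proof (br_ge1 k) as Bk.
  set (c := K * (3 * cv) / (br j * br k)).
  assert (Hc : 0 <= c). { unfold c, Rdiv. apply Rmult_le_pos. nra. left. apply Rinv_0_lt_compat. nra. }
  assert (Hg : is_lim_seq (rzpsum (fun m => c * h m)) (c * l)).
  { eapply is_lim_seq_ext. 2: apply (is_lim_seq_scal_l _ c _ Hl).
    intros N. unfold rzpsum. symmetry. apply (sum_n_mult_l c). }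
  apply Rle_trans with (c * l). apply (dom _ (fun m => c * h m) (c * l)). 2: exact Hg.
  - intros m. rewrite Cmod_mult.
    pose proof (br_ge1 m) as Bm. pose proof (HD m) as Dmp.
    pose proof (Rp_pos (j - m) alpha). pose proof (Rp_pos (m - k) alpha).
    pose proof (exp_pos (- beta * IZR (Z.abs (j - m)))). pose proof (exp_pos (- beta * IZR (Z.abs (m - k)))).
    eapply Rle_trans. apply Rmult_le_compat. apply Cmod_ge_0. apply Cmod_ge_0.
    apply HP. apply (G_bound v alpha beta cv Hcv Hdecay).
    unfold c, h.
    set (e1 := exp (- beta * IZR (Z.abs (j - m)))) in *.
    set (e2 := exp (- beta * IZR (Z.abs (m - k)))) in *.
    replace (- beta * IZR (Z.abs (j - m)) - beta * IZR (Z.abs (m - k))) with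
      (- beta * IZR (Z.abs (j - m)) + - beta * IZR (Z.abs (m - k))) by ring.
    rewrite exp_plus. fold e1 e2.
    set (R1 := Rpower (br (j - m)) alpha) in *. set (R2 := Rpower (br (m - k)) alpha) in *.
    set (W := K * (3 * cv) * e1 * e2 / (R1 * R2)).
    assert (HW : 0 <= W). { unfold W, Rdiv. apply Rmult_le_pos. repeat apply Rmult_le_pos; lra. left. apply Rinv_0_lt_compat. nra. }
    replace (K * e1 / (Dm m * R1) * (3 * cv * e2 / ((br m + br k) * R2))) with (W * / (Dm m * (br m + br k))) by (unfold W; field; repeat split; lra).
    replace (K * (3 * cv) / (br j * br k) * (e1 * e2 / (R1 * R2))) with (W * / (br j * br k)) by (unfold W; field; repeat split; lra).
    apply Rmult_le_compat_l. exact HW. apply Rinv_le_contravar. nra. apply HDk.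
  - eapply Rle_trans. apply Rmult_le_compat_l. exact Hc. exact Hle.
    pose proof (Rp_pos (j - k) alpha).
    right. unfold c. field. repeat split; lra.
Qed.

Theorem mainTheorem4 (v : Z -> C) (alpha beta cv calpha : R)
  (Hv0 : v 0%Z = 0%C)
  (Hreal : forall k : Z, v (- k)%Z = Cconj (v k))
  (Halpha : 1 < alpha) (Hbeta : 0 <= beta)
  (Hcalpha : conv_const alpha calpha)
  (Hdecay : forall k : Z,
     Cmod (v k) <= cv * exp (- beta * IZR (Z.abs k)) / Rpower (br k) alpha) :
  (forall j k : Z,
     Cmod (Gmat v j k) <=
       3 * cv * exp (- beta * IZR (Z.abs (j - k)))
       / ((br j + br k) * Rpower (br (j - k)) alpha)) /\
  (forall (n : nat) (j k : Z), (2 <= n)%nat ->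
     Cmod (Gpow v n j k) <=
       (3 * cv) ^ n * calpha ^ (n - 1) * exp (- beta * IZR (Z.abs (j - k)))
       / (br j * br k * Rpower (br (j - k)) alpha)).
Proof.
  assert (Hcv : 0 <= cv).
  { pose proof (Hdecay 0%Z) as H. rewrite Hv0, Cmod_0 in H.
    pose proof (exp_pos (- beta * IZR (Z.abs 0))). pose proof (Rp_pos 0 alpha).
    replace (cv * exp (- beta * IZR (Z.abs 0)) / Rpower (br 0) alpha) with
      (cv * (exp (- beta * IZR (Z.abs 0)) / Rpower (br 0) alpha)) in H by (field; lra).
    assert (0 < exp (- beta * IZR (Z.abs 0)) / Rpower (br 0) alpha) by (apply Rdiv_lt_0_compat; lra).
    nra. }
  assert (Hca : 0 <= calpha).
  { destruct (Hcalpha 0 (Rle_refl 0) 0%Z 0%Z) as [[l Hl] Hle].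
    rewrite (is_lim_seq_unique _ _ Hl) in Hle. simpl in Hle.
    set (h := fun k : Z => exp (- 0 * IZR (Z.abs (0 - k)) - 0 * IZR (Z.abs (k - 0))) /
          (Rpower (br (0 - k)) alpha * Rpower (br (k - 0)) alpha)) in *.
    assert (Hh : forall m, 0 <= h m).
    { intros m. unfold h. left. apply Rdiv_lt_0_compat. apply exp_pos.
      pose proof (Rp_pos (0 - m) alpha). pose proof (Rp_pos (m - 0) alpha). nra. }
    assert (Hs : forall N, 0 <= rzpsum h N).
    { induction N. rewrite rzp0. apply Hh. rewrite rzp_rec.
      pose proof (Hh (Z.of_nat (S N))). pose proof (Hh (- Z.of_nat (S N))%Z). lra. }
    assert (Hl0 : Rbar_le 0 l) by (eapply is_lim_seq_le; [apply Hs | apply is_lim_seq_const | exact Hl]).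
    simpl in Hl0.
    unfold Rdiv in Hle. rewrite Rmult_assoc in Hle.
    pose proof (exp_pos (-0*0)) as He. pose proof (Rp_pos 0 alpha) as Hp.
    revert Hle Hl0 He Hp. generalize (exp (-0*0)) (Rpower (br 0) alpha). clear.
    intros e p Hle Hl0 He Hp.
    assert (0 < e * / p) by (apply Rmult_lt_0_compat; [lra| apply Rinv_0_lt_compat; lra]).
    nra. }
  split.
  { intros j k. apply (G_bound v alpha beta cv Hcv Hdecay). }
  assert (H1 : forall j m, Gpow v 1 j m = Gmat v j m).
  { intros j m. simpl. rewrite (zsum_delta _ j).
    - rewrite Z.eqb_refl. apply Cmult_1_l.
    - intros m' Hm'. destruct (Z.eqb_spec j m'). congruence. apply Cmult_0_l. }
  assert (Main : forall n j k, Cmod (Gpow v (S (S n)) j k) <=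
       (3 * cv) ^ (S (S n)) * calpha ^ (S (S n) - 1) * exp (- beta * IZR (Z.abs (j - k)))
       / (br j * br k * Rpower (br (j - k)) alpha)).
  { induction n; intros j k.
    - change (Gpow v 2 j k) with (zsum (fun m => (Gpow v 1 j m * Gmat v m k)%C)).
      eapply Rle_trans.
      + apply (step v alpha beta cv calpha Hbeta Hcv Hcalpha Hdecay _ (3 * cv) (fun m => br j + br m) j k).
        * lra.
        * intros m. pose proof (br_ge1 j). pose proof (br_ge1 m). cbv beta. lra.
        * intros m. pose proof (br_ge1 j). pose proof (br_ge1 m). pose proof (br_ge1 k). cbv beta. nra.
        * intros m. rewrite H1. apply (G_bound v alpha beta cv Hcv Hdecay).
      + right. simpl. unfold Rdiv. ring.
    - change (Gpow v (S (S (S n))) j k) with (zsum (fun m => (Gpow v (S (S n)) j m * Gmat v m k)%C)).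
      eapply Rle_trans.
      + apply (step v alpha beta cv calpha Hbeta Hcv Hcalpha Hdecay _
           ((3 * cv) ^ (S (S n)) * calpha ^ (S (S n) - 1)) (fun m => br j * br m) j k).
        * apply Rmult_le_pos; apply pow_le; lra.
        * intros m. pose proof (br_ge1 j). pose proof (br_ge1 m). cbv beta. nra.
        * intros m. pose proof (br_ge1 j). pose proof (br_ge1 m). pose proof (br_ge1 k). cbv beta. assert (0 <= br j * br k) by nra. assert (0 <= br j * (br m * br m)) by (apply Rmult_le_pos; nra). nra.
        * intros m. apply IHn.
      + right. replace (S (S (S n)) - 1)%nat with (S (S (S n) - 1)) by lia. simpl. unfold Rdiv. ring. }
  intros n j k Hn. destruct n as [|[|n]]; try lia. apply Main.
Qed.
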